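(* Let $\mathcal{X}=\mathcal{X}_1\times\cdots\times\mathcal{X}_d$ and let $M:\mathcal{X}^n\to\mathcal{Y}$ be a randomized algorithm. (1) If $M$ satisfies $\varepsilon_0$-$\nabla_0$DP, then $M$ satisfies $(d\varepsilon_0)$-DP. (2) If $M$ satisfies $\varepsilon_0$-$\nabla_0$CDP, then $M$ satisfies $\frac12 d^2\varepsilon_0^2$-zCDP, which in turn implies that $M$ satisfies $(\tilde\varepsilon,\tilde\delta)$-DP for every $\tilde\varepsilon\ge\frac12 d^2\varepsilon_0^2$ with $\tilde\delta=\exp\!\left(-(\tilde\varepsilon-\frac12 d^2\varepsilon_0^2)^2/(2d^2\varepsilon_0^2)\right)$. (3) More generally, if $M$ satisfies $\varepsilon$-$\nabla$DP for a symmetric non-negative $\varepsilon:\mathcal{X}\times\mathcal{X}\to\mathbb{R}$, then $M$ satisfies $(\sup_{x,x'\in\mathcal{X}}\varepsilon(x,x'))$-DP. (4) Conversely, if $M$ satisfies $\varepsilon$-DP for a constant $\varepsilon\ge0$, then $M$ satisfies $\varepsilon$-$\nabla$DP (with $\varepsilon$ viewed as a constant function) and $\varepsilon$-$\nabla_0$DP.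
   Context: Two datasets $x,x'\in\mathcal{X}^n$ differ on a single entry if there is $i$ with $x_j=x'_j$ for all $j\ne i$. $M$ is $(\varepsilon,\delta)$-DP if for all such $x,x'$ and measurable $S$, $\Pr[M(x)\in S]\le e^{\varepsilon}\Pr[M(x')\in S]+\delta$; $\varepsilon$-DP means $\delta=0$. Rényi divergence: $D_\lambda(P\|Q)=\frac{1}{\lambda-1}\log\mathbb{E}_{X\sim P}[(P(X)/Q(X))^{\lambda-1}]$, $D_*(P\|Q)=\sup_{\lambda>1}\frac1\lambda D_\lambda(P\|Q)$. $M$ is $\frac12\varepsilon^2$-zCDP if $D_*(M(x)\|M(x'))\le\frac12\varepsilon^2$ for all such $x,x'$. For symmetric non-negative $\varepsilon:\mathcal{X}\times\mathcal{X}\to\mathbb{R}$, $M$ is $\varepsilon$-$\nabla$DP if for all $x,x'$ differing only in entry $i$, $\Pr[M(x)\in S]\le e^{\varepsilon(x_i,x'_i)}\Pr[M(x')\in S]$ for all $S$; $\varepsilon$-$\nabla$CDP if $D_*(M(x)\|M(x'))\le\frac12\varepsilon(x_i,x'_i)^2$. With $\|u-v\|_0=|\{j\in[d]:u_j\ne v_j\}|$ for $u,v\in\mathcal{X}$, $\varepsilon_0$-$\nabla_0$DP (resp. $\varepsilon_0$-$\nabla_0$CDP) means $\varepsilon$-$\nabla$DP (resp. $\varepsilon$-$\nabla$CDP) with $\varepsilon(u,v)=\varepsilon_0\|u-v\|_0$. *)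

(* Defs.v *)
From mathcomp Require Import all_boot all_order all_algebra.
From mathcomp Require Import all_classical all_reals all_analysis.
Set Implicit Arguments.
Unset Strict Implicit.
Unset Printing Implicit Defensive.
Import Order.TTheory GRing.Theory Num.Theory.
Local Open Scope classical_set_scope.
Local Open Scope ring_scope.

Section DPdefs.
Context {R : realType} {dY : measure_display} {Y : measurableType dY}.

Local Open Scope ereal_scope.
Local Open Scope charge_scope.

Definition renyi_div (P Q : probability Y R) (lam : R) : \bar R :=
  if `[< P `<< Q >] then
    let I := \int[P]_y (('d (charge_of_finite_measure P) '/d Q) y `^ (lam - 1)%R) in
    if I == +oo then +oo else ((lam - 1)^-1 * ln (fine I))%:E
  else +oo.

Definition renyi_star (P Q : probability Y R) : \bar R :=
  ereal_sup [set (lam^-1)%:E * renyi_div P Q lam | lam in [set lam : R | (1 < lam)%R]].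

(* datasets of size n over the data domain T are functions 'I_n -> T *)
Definition differ_single {T : Type} {n : nat} (x x' : 'I_n -> T) : Prop :=
  exists i : 'I_n, forall j : 'I_n, j != i -> x j = x' j.

Definition DP {T : Type} {n : nat} (M : ('I_n -> T) -> probability Y R)
    (eps delta : R) : Prop :=
  forall x x' : 'I_n -> T, differ_single x x' ->
  forall S : set Y, measurable S ->
    M x S <= (expR eps)%:E * M x' S + delta%:E.

(* rho-zCDP (rho = eps^2/2 in the paper's notation) *)
Definition zCDP {T : Type} {n : nat} (M : ('I_n -> T) -> probability Y R)
    (rho : R) : Prop :=
  forall x x' : 'I_n -> T, differ_single x x' ->
    renyi_star (M x) (M x') <= rho%:E.

Definition gradDP {T : Type} {n : nat} (epsf : T -> T -> R)
    (M : ('I_n -> T) -> probability Y R) : Prop :=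
  forall (x x' : 'I_n -> T) (i : 'I_n), (forall j : 'I_n, j != i -> x j = x' j) ->
  forall S : set Y, measurable S ->
    M x S <= (expR (epsf (x i) (x' i)))%:E * M x' S.

Definition gradCDP {T : Type} {n : nat} (epsf : T -> T -> R)
    (M : ('I_n -> T) -> probability Y R) : Prop :=
  forall (x x' : 'I_n -> T) (i : 'I_n), (forall j : 'I_n, j != i -> x j = x' j) ->
    renyi_star (M x) (M x') <= ((epsf (x i) (x' i)) ^+ 2 / 2)%:E.

End DPdefs.

Definition l0dist {d : nat} {Xs : 'I_d -> Type} (u v : forall j : 'I_d, Xs j) : nat :=
  #|[set j : 'I_d | `[< u j <> v j >] ]|.

Definition grad0DP {R : realType} {dY : measure_display} {Y : measurableType dY}
    {d n : nat} {Xs : 'I_d -> Type} (eps0 : R)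
    (M : ('I_n -> forall j : 'I_d, Xs j) -> probability Y R) : Prop :=
  gradDP (fun u v => eps0 * (l0dist u v)%:R) M.

Definition grad0CDP {R : realType} {dY : measure_display} {Y : measurableType dY}
    {d n : nat} {Xs : 'I_d -> Type} (eps0 : R)
    (M : ('I_n -> forall j : 'I_d, Xs j) -> probability Y R) : Prop :=
  gradCDP (fun u v => eps0 * (l0dist u v)%:R) M.

(* Main.v *)
Require Import Defs.
From mathcomp Require Import all_boot all_order all_algebra.
From mathcomp Require Import all_classical all_reals all_analysis.
From mathcomp Require Import measurable_realfun.
Import Order.TTheory GRing.Theory Num.Theory.
Local Open Scope classical_set_scope.
Local Open Scope ring_scope.
From mathcomp Require Import lra ring.

Section key.
Local Open Scope ereal_scope.
Local Open Scope charge_scope.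
Context (R : realType) (dY : measure_display) (Y : measurableType dY).

Lemma key (P Q : probability Y R) (rho eps : R) :
  (0 < rho)%R -> (rho < eps)%R -> renyi_star P Q <= rho%:E ->
  forall S, measurable S ->
  P S <= (expR eps)%:E * Q S + (expR (- ((eps - rho)^+2 / (4*rho))))%:E.
Proof.
move=> rho0 rhoeps H S mS.
pose lam := ((eps + rho) / (2*rho))%R.
have lam1 : (1 < lam)%R.
  rewrite /lam ltr_pdivlMr ?mulr_gt0 //; lra.
have lamE : lam = ((eps + rho) / (2*rho))%R by [].
clearbody lam.
have H1 : (lam^-1)%:E * renyi_div P Q lam <= rho%:E.
  apply: le_trans H; apply: ereal_sup_ubound; exists lam => //.
move: H1; rewrite /renyi_div; case: asboolP => [PQ|_]; last first.
  by rewrite gt0_muley ?lte_fin ?invr_gt0 ?(lt_trans ltr01) // leye_eq.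
have PQ' : charge_of_finite_measure P `<< Q := PQ.
set f := 'd (charge_of_finite_measure P) '/d Q.
set I := \int[P]_y _.
case: eqP => [_|Inoo]; first by rewrite gt0_muley ?lte_fin ?invr_gt0 ?(lt_trans ltr01) // leye_eq.
rewrite -EFinM lee_fin => Hln.
have lnI : (ln (fine I) <= (lam - 1) * lam * rho)%R.
  have l0 : (0 < lam - 1)%R by rewrite subr_gt0.
  have lp : (0 < lam)%R by rewrite (lt_trans ltr01).
  move: Hln; rewrite mulrA -invfM ler_pdivrMl ?mulr_gt0 // => Hln'; by rewrite (mulrC (lam-1)%R).
have I0 : 0 <= I by apply: integral_ge0 => y _; exact: poweR_ge0.
have Ifin : I \is a fin_num by rewrite ge0_fin_numE // ltey; apply/eqP.
have fI : (fine I <= expR ((lam - 1) * lam * rho))%R.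
  have := fine_ge0 I0; rewrite le0r => /orP [/eqP ->|Ip]; first exact: expR_ge0.
  by rewrite -(lnK Ip) ler_expR.
have ffin y : f y \is a fin_num by exact: Radon_Nikodym_fin_num _ PQ'.
have mf : measurable_fun [set: Y] f.
  exact: measurable_int (Radon_Nikodym_integrable PQ').
pose A := [set y | (expR eps)%:E < f y].
have mA : measurable A.
  by rewrite -(setTI A); apply: measurable_lte => //; exact: measurable_cst.
have mSA : measurable (S `\` A) by exact: measurableD.
rewrite (measureDI P mS mA); apply: leeD.
  have E1 := Radon_Nikodym_integral PQ' mSA.
  apply: (@le_trans _ _ (\int[Q]_(y in S `\` A) f y)); first by rewrite -E1; exact: lexx.
  apply: (@le_trans _ _ (\int[Q]_(y in S `\` A) (EFin \o cst (expR eps)) y)).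
    apply: le_integral => //.
    - exact: integrableS (Radon_Nikodym_integrable PQ').
    - exact: finite_measure_integrable_cst.
    - move=> y; rewrite inE => -[_ nA] /=; rewrite leNgt; exact/negP.
  rewrite (integral_cst Q mSA ((expR eps)%:E)).
  by apply: lee_wpmul2l; [rewrite lee_fin expR_ge0 | apply: le_measure; rewrite ?inE //; exact: subDsetl].
apply: (@le_trans _ _ (P A)).
  apply: le_measure; rewrite ?inE //; exact: measurableI.
pose c := expR ((lam - 1) * eps).
have cA : P A * c%:E <= I.
  rewrite muleC -(integral_cst P mA).
  apply: (@le_trans _ _ (\int[P]_(y in A) f y `^ (lam - 1))).
    apply: ge0_le_integral => //.
    - by move=> y _; rewrite lee_fin expR_ge0.
    - apply: measurable_funS (measurableT_comp (measurable_poweR _) mf) => //.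
    - move=> y Ay; move: Ay (ffin y); rewrite /A /=.
      case: (f y) => // r; rewrite lte_fin => er _.
      have r0 : (0 < r)%R by apply: lt_trans er; exact: expR_gt0.
      rewrite poweR_EFin lee_fin /powR gt_eqF // ler_expR ler_pM2l ?subr_gt0 //.
      by rewrite -[X in (X <= _)%R]expRK ler_ln ?posrE ?expR_gt0 // ltW.
  apply: ge0_subset_integral => //.
  - exact: measurableT_comp (measurable_poweR _) mf.
  - by move=> y _; exact: poweR_ge0.
have PAfin : P A = (fine (P A))%:E by rewrite fineK // fin_num_measure.
move: cA; rewrite PAfin -EFinM -(fineK Ifin) !lee_fin => cA.
have c0 : (0 < c)%R by exact: expR_gt0.
rewrite -ler_pdivlMr // in cA.
apply: (le_trans cA); rewrite ler_pdivrMr // /c -expRD.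
apply: (le_trans fI); rewrite ler_expR le_eqVlt; apply/orP; left; apply/eqP.
rewrite lamE; field.
by rewrite gt_eqF.
Qed.
End key.

Theorem proposition2p8 (R : realType) (dY : measure_display) (Y : measurableType dY)
    (d n : nat) (Xs : 'I_d -> Type)
    (M : ('I_n -> forall j : 'I_d, Xs j) -> probability Y R) :
  [/\
  (* (1) *)
  (forall eps0 : R, 0 <= eps0 -> grad0DP eps0 M -> DP M (d%:R * eps0) 0),
  (* (2) *)
  (forall eps0 : R, 0 <= eps0 -> grad0CDP eps0 M ->
     zCDP M ((d%:R * eps0) ^+ 2 / 2) /\
     (forall epst : R, (d%:R * eps0) ^+ 2 / 2 <= epst ->
        DP M epst (expR (- ((epst - (d%:R * eps0) ^+ 2 / 2) ^+ 2
                             / (2 * (d%:R * eps0) ^+ 2)))))),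
  (* (3) *)
  (forall epsf : (forall j : 'I_d, Xs j) -> (forall j : 'I_d, Xs j) -> R,
     (forall u v, epsf u v = epsf v u) -> (forall u v, 0 <= epsf u v) ->
     has_ubound (range (fun uv => epsf uv.1 uv.2)) ->
     gradDP epsf M -> DP M (sup (range (fun uv => epsf uv.1 uv.2))) 0) &
  (* (4) *)
  (forall eps : R, 0 <= eps -> DP M eps 0 ->
     gradDP (fun _ _ => eps) M /\ grad0DP eps M)].

Proof.
have l0le (u v : forall j : 'I_d, Xs j) : (l0dist u v <= d)%N.
  by rewrite /l0dist (leq_trans (max_card _)) // card_ord.
have Mle1 x S : measurable S -> (M x S <= 1)%E by move=> mS; exact: probability_le1.
have triv x x' S e : measurable S -> (M x S <= (expR e)%:E * M x' S + (expR 0)%:E)%E.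
  move=> mS; rewrite expR0; apply: le_trans (Mle1 x S mS) _.
  by rewrite leeDr // mule_ge0 // lee_fin expR_ge0.
split.
- move=> eps0 e0 H x x' [i Hi] S mS.
  rewrite adde0; apply: le_trans (H x x' i Hi S mS) _.
  apply: lee_wpmul2r => //; rewrite lee_fin ler_expR mulrC ler_wpM2r // ler_nat.
  exact: l0le.
- move=> eps0 e0 H.
  have Z : zCDP M ((d%:R * eps0) ^+ 2 / 2).
    move=> x x' [i Hi]; apply: le_trans (H x x' i Hi) _; rewrite lee_fin.
    apply: ler_pM => //; first exact: sqr_ge0.
    rewrite lerXn2r ?nnegrE ?mulr_ge0 //.
    by rewrite mulrC ler_wpM2r // ler_nat.
  split => // epst Hle x x' hd S mS.
  have [r0|rp] := eqVneq ((d%:R * eps0) ^+ 2) 0.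
    by rewrite r0 mulr0 invr0 mulr0 oppr0; exact: triv.
  have [er|ep] := eqVneq epst ((d%:R * eps0) ^+ 2 / 2).
    by rewrite er subrr expr0n /= mul0r oppr0; exact: triv.
  have rpos : (0 < (d%:R * eps0) ^+ 2 / 2)%R.
    by rewrite divr_gt0 // lt0r rp sqr_ge0.
  have -> : (2 * (d%:R * eps0) ^+ 2 = 4 * ((d%:R * eps0) ^+ 2 / 2))%R by field.
  apply: key => //; first by rewrite lt_neqAle eq_sym ep Hle.
  exact: Z.
- move=> epsf sym pos ub H x x' [i Hi] S mS.
  rewrite adde0; apply: le_trans (H x x' i Hi S mS) _.
  apply: lee_wpmul2r => //; rewrite lee_fin ler_expR.
  apply: sup_upper_bound; first by split => //; exists (epsf (x i) (x' i)); exists (x i, x' i).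
  by exists (x i, x' i).
- move=> eps e0 H; split.
    move=> x x' i Hi S mS.
    have := H x x' (ex_intro _ i Hi) S mS; by rewrite adde0.
  move=> x x' i Hi S mS.
  have [l0|l0] := eqVneq (l0dist (x i) (x' i)) 0%N.
    have xx : x = x'.
      apply: funext => j; have [->|ji] := eqVneq j i; last exact: Hi.
      apply: functional_extensionality_dep => k.
      move: l0; rewrite /l0dist => h; have := card0_eq h k; rewrite !inE /=.
      move=> /negbT /negP nk; case: (pselect (x i k = x' i k)) => // ne; exfalso; apply: nk. rewrite in_setE /=; exact/asboolP.
    by rewrite l0 mulr0 expR0 mul1e xx.
  have := H x x' (ex_intro _ i Hi) S mS; rewrite adde0 => h; apply: le_trans h _.
  by apply: lee_wpmul2r => //; rewrite lee_fin ler_expR ler_peMr // ler1n lt0n l0.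
Qed.
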